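(* Let $R$ be a local $\mathbb{F}_p$-algebra and let $M$ be a finitely presented $R$-module such that $F_R^*M\simeq M$, where $F_R$ is the absolute Frobenius of $R$. Then $M$ is free. *)

(* Defs.v *)
From HB Require Import structures.
From mathcomp Require Import all_boot all_order all_algebra.
Set Implicit Arguments. Unset Strict Implicit. Unset Printing Implicit Defensive.
Import GRing.Theory.
Local Open Scope ring_scope.

Section Defs.
Variable R : comUnitRingType.

Definition is_ideal (I : R -> Prop) : Prop :=
  I 0 /\ (forall x y, I x -> I y -> I (x + y)) /\ (forall a x, I x -> I (a * x)).

Definition maximal_ideal (I : R -> Prop) : Prop :=
  is_ideal I /\ ~ I 1 /\
  (forall J : R -> Prop, is_ideal J -> ~ J 1 -> (forall x, I x -> J x) ->
     forall x, J x -> I x).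

Definition local_ring : Prop :=
  exists I, maximal_ideal I /\
    forall J, maximal_ideal J -> forall x, J x <-> I x.

Definition Fp_algebra (p : nat) : Prop := prime p /\ (p%:R : R) = 0.

Definition Rlinear (U V : lmodType R) (f : U -> V) : Prop :=
  forall (a : R) (u v : U), f (a *: u + v) = a *: f u + f v.

Definition frob_linear (p : nat) (U V : lmodType R) (f : U -> V) : Prop :=
  (forall u v : U, f (u + v) = f u + f v) /\
  (forall (a : R) (u : U), f (a *: u) = a ^+ p *: f u).

(* (N, phi) is the Frobenius pullback F_R^* M = R (x)_{F_R, R} M, characterized
   by its universal property: phi : M -> N is p-linear and every p-linear map
   M -> N' factors uniquely through an R-linear map N -> N'. *)
Definition is_frob_pullback (p : nat) (M N : lmodType R) (phi : M -> N) : Prop :=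
  frob_linear p phi /\
  forall (N' : lmodType R) (psi : M -> N'), frob_linear p psi ->
    exists g : N -> N', Rlinear g /\ (forall m, psi m = g (phi m)) /\
      forall g' : N -> N', Rlinear g' -> (forall m, psi m = g' (phi m)) ->
        forall x, g' x = g x.

Definition frob_pullback_iso (p : nat) (M : lmodType R) : Prop :=
  exists phi : M -> M, is_frob_pullback p phi.

Definition finitely_presented (M : lmodType R) : Prop :=
  exists (n m : nat) (f : 'rV[R]_n -> M) (g : 'rV[R]_m -> 'rV[R]_n),
    Rlinear f /\ Rlinear g /\ (forall x : M, exists u, f u = x) /\
    (forall u, f u = 0 <-> exists w, g w = u).

Definition free_module (M : lmodType R) : Prop :=
  exists (I : Type) (e : I -> M),
    (forall (n : nat) (idx : 'I_n -> I) (c : 'I_n -> R), injective idx ->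
       \sum_(i < n) c i *: e (idx i) = 0 -> forall i, c i = 0) /\
    (forall x : M, exists (n : nat) (idx : 'I_n -> I) (c : 'I_n -> R),
       x = \sum_(i < n) c i *: e (idx i)).
End Defs.

(* Main.v *)
From HB Require Import structures.
From mathcomp Require Import all_boot all_order all_algebra.
From mathcomp Require Import boolp classical_sets.
From Stdlib Require Import Classical_Prop ClassicalEpsilon FunctionalExtensionality PropExtensionality.
Require Import Defs.
Set Implicit Arguments. Unset Strict Implicit. Unset Printing Implicit Defensive.
Import GRing.Theory.
Local Open Scope ring_scope.

Section Local.
Variable R : comUnitRingType.

Lemma nonunit_in_max (I : R -> Prop) :
  local_ring R -> maximal_ideal I -> forall a : R, a \notin GRing.unit -> I a.
Proof.
move=> [I0 [mI0 uI0]] mI a na.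
pose P : set (set R) := fun A => A = set0 \/ (is_ideal A /\ ~ A 1 /\ A a).
have hZ : forall F : set (set R), (F `<=` P)%classic -> total_on F subset ->
    P (\bigcup_(X in F) X)%classic.
  move=> F FP Ftot.
  case: (pselect (exists X, F X /\ X <> set0)) => [[X [FX X0]]|noX].
    right; split; [split; [|split]|split].
    - exists X => //; case: (FP X FX) => // -[[]] //.
    - move=> x y [X1 F1 x1] [X2 F2 y2].
      case: (Ftot X1 X2 F1 F2) => S12.
      + exists X2 => //; case: (FP X2 F2) => [E|[[_ [hD _]] _]].
          by rewrite E in y2.
        by apply: hD => //; apply: S12.
      + exists X1 => //; case: (FP X1 F1) => [E|[[_ [hD _]] _]].
          by rewrite E in x1.
        by apply: hD => //; apply: S12.
    - move=> r x [X1 F1 x1]; exists X1 => //; case: (FP X1 F1) => [E|[[_ [_ hM]] _]].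
        by rewrite E in x1.
      by apply: hM.
    - move=> [X1 F1 x1]; case: (FP X1 F1) => [E|[_ [h1 _]]].
        by rewrite E in x1.
      exact: h1 x1.
    - exists X => //; case: (FP X FX) => // -[_ []] //.
  left; apply/seteqP; split => x // [X1 F1 x1].
  case: (FP X1 F1) => [E|[Ii _]]; first by rewrite E in x1.
  exfalso; apply: noX; exists X1; split => // E; by rewrite E in x1.
have [A [PA Amax]] := Zorn_bigcup hZ.
pose B : set R := fun x => exists r, x = r * a.
have PB : is_ideal B /\ ~ B 1 /\ B a.
  split; [split; [|split]|split].
  - by exists 0; rewrite mul0r.
  - by move=> x y [r ->] [s ->]; exists (r + s); rewrite mulrDl.
  - by move=> r x [s ->]; exists (r * s); rewrite mulrA.
  - move=> [r /esym E]; apply/negP: na; rewrite negbK.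
    by apply/unitrP; exists r; split => //; rewrite mulrC.
  - by exists 1; rewrite mul1r.
have [IA [nA1 Aa]] : is_ideal A /\ ~ A 1 /\ A a.
  case: PA => // EA; exfalso; apply: (Amax B); last by right.
  rewrite EA; split => // H; have := H 0; rewrite /set0 /=; apply.
  by case: PB => [[]].
have mA : maximal_ideal A.
  split => //; split => // J IJ nJ AJ x Jx.
  apply: NNPP => nAx; apply: (Amax J); last by right; split => //; split => //; exact: AJ.
  split => // H; exact: nAx (H x Jx).
by apply/(proj2 (uI0 I mI a)); apply/(proj1 (uI0 A mA a)).
Qed.

Lemma local_addn (a b : R) : local_ring R ->
  a \notin GRing.unit -> b \notin GRing.unit -> a + b \notin GRing.unit.
Proof.
move=> loc na nb; have [I [mI _]] := loc.
have Ia := nonunit_in_max loc mI na; have Ib := nonunit_in_max loc mI nb.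
case: mI => [[_ [hD hM]] [n1 _]].
apply/negP => u; apply: n1; rewrite -(mulVr u); apply: hM; exact: hD.
Qed.

Lemma local_mulnl (a b : R) : a \notin GRing.unit -> a * b \notin GRing.unit.
Proof. by rewrite unitrM => /negbTE ->. Qed.

Lemma local_mulnr (a b : R) : b \notin GRing.unit -> a * b \notin GRing.unit.
Proof. by rewrite unitrM => /negbTE ->; rewrite andbF. Qed.

Lemma local_1B (a : R) : local_ring R -> a \notin GRing.unit -> 1 - a \is a GRing.unit.
Proof.
move=> loc na; apply: contraT => nb.
have := local_addn loc nb na; rewrite subrK unitr1; done.
Qed.

Lemma local_sum (I : finType) (F : I -> R) : local_ring R ->
  (forall i, F i \notin GRing.unit) -> \sum_i F i \notin GRing.unit.
Proof.
move=> loc H; apply: (big_ind (fun x : R => x \notin GRing.unit)) => //.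
- by rewrite unitr0.
- by move=> x y; apply: local_addn.
Qed.

Lemma nak_ord (loc : local_ring R) k (s : 'I_k -> R) (U : 'I_k -> 'I_k -> R) :
  (forall i j, U i j \notin GRing.unit) ->
  (forall i, s i = \sum_j U i j * s j) -> forall i, s i = 0.
Proof.
elim: k s U => [|k IH] s U hU hs; first by case.
have h0 := hs ord0; rewrite big_ord_recl in h0.
set u := (1 - U ord0 ord0)^-1.
have uu : (1 - U ord0 ord0) \is a GRing.unit by apply: local_1B.
pose v j := u * U ord0 (lift ord0 j).
have s0eq : s ord0 = \sum_j v j * s (lift ord0 j).
  have : (1 - U ord0 ord0) * s ord0 = \sum_(j < k) U ord0 (lift ord0 j) * s (lift ord0 j).
    by rewrite mulrBl mul1r {1}h0 addrC addKr.
  move/(congr1 (fun x => u * x)) => /=; rewrite mulrA mulVr // mul1r => ->.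
  by rewrite big_distrr; apply: eq_bigr => j _; rewrite /v; apply: mulrA.
have vn j : v j \notin GRing.unit by apply: local_mulnr.
pose s' j := s (lift ord0 j).
pose U' i j := U (lift ord0 i) (lift ord0 j) + U (lift ord0 i) ord0 * v j.
have hs' : forall i, s' i = \sum_j U' i j * s' j.
  move=> i; rewrite /s' hs big_ord_recl s0eq big_distrr -big_split /=.
  apply: eq_bigr => j _; rewrite /U' mulrDl addrC; congr (_ + _); by rewrite /v mulrA.
have hU' i j : U' i j \notin GRing.unit.
  by apply: local_addn => //; apply: local_mulnr.
have z := IH s' U' hU' hs'.
have s00 : s ord0 = 0 by rewrite s0eq big1 // => j _; rewrite -/(s' j) z mulr0.
by move=> i; case: (unliftP ord0 i) => [j ->|->] //; apply: z.
Qed.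

Lemma nak (loc : local_ring R) (T : finType) (s : T -> R) (U : T -> T -> R) :
  (forall i j, U i j \notin GRing.unit) ->
  (forall i, s i = \sum_j U i j * s j) -> forall i, s i = 0.
Proof.
move=> hU hs t.
have H := @nak_ord loc _ (fun k => s (enum_val k)) (fun k l => U (enum_val k) (enum_val l))
  (fun k l => hU (enum_val k) (enum_val l)).
rewrite -(enum_rankK t); apply: H => k.
rewrite hs (reindex (@enum_val T (mem T))) //; apply: onW_bij; exact: enum_val_bij.
Qed.
End Local.
Record submod (R : comUnitRingType) (V : lmodType R) := Submod {
  sm_pred : V -> Prop;
  sm0 : sm_pred 0;
  smD : forall x y, sm_pred x -> sm_pred y -> sm_pred (x + y);
  smZ : forall (a : R) x, sm_pred x -> sm_pred (a *: x) }.

Section QuotDefs.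
Variables (R : comUnitRingType) (V : lmodType R) (W : submod V).
Let S := sm_pred W.
Lemma smN x : S x -> S (- x).
Proof. by move=> h; rewrite -scaleN1r; apply: smZ. Qed.
Lemma smB x y : S x -> S y -> S (x - y).
Proof. by move=> hx hy; apply: smD => //; apply: smN. Qed.

Definition rep (v : V) : V := epsilon (inhabits (0 : V)) (fun w => S (w - v)).
Lemma rep_spec v : S (rep v - v).
Proof.
rewrite /rep; apply: (epsilon_spec (inhabits (0:V)) (fun w => S (w - v))).
by exists v; rewrite subrr; apply: sm0.
Qed.
Lemma rep_eq v w : S (v - w) -> rep v = rep w.
Proof.
move=> h; rewrite /rep; congr (epsilon _ _); apply: functional_extensionality => u.
apply: propositional_extensionality; split => hu.
- have -> : u - w = (u - v) + (v - w) by rewrite addrA subrK.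
  exact: smD.
- have -> : u - v = (u - w) - (v - w) by rewrite opprB addrA subrK.
  exact: smB.
Qed.
Lemma rep_rep v : rep (rep v) = rep v.
Proof. apply: rep_eq; exact: rep_spec. Qed.
End QuotDefs.

Definition quot (R : comUnitRingType) (V : lmodType R) (W : submod V) :=
  {v : V | rep W v == v}.
HB.instance Definition _ (R : comUnitRingType) (V : lmodType R) (W : submod V) :=
  Choice.on (quot W).

Section QuotOps.
Variables (R : comUnitRingType) (V : lmodType R) (W : submod V).
Let S := sm_pred W.
Definition qpi (v : V) : quot W :=
  exist (fun v => rep W v == v) (rep W v) (introT eqP (rep_rep W v)).
Lemma qpiK (q : quot W) : qpi (val q) = q.
Proof. by apply: val_inj => /=; apply/eqP; case: q. Qed.
Lemma qpi_eq v w : S (v - w) -> qpi v = qpi w.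
Proof. by move=> h; apply: val_inj => /=; apply: rep_eq. Qed.
Lemma qpi_eqP v w : qpi v = qpi w -> S (v - w).
Proof.
move=> /(congr1 val) /= e.
have -> : v - w = (rep W w - w) - (rep W v - v) + (rep W v - rep W w).
  by rewrite e subrr addr0 opprB [in RHS]addrC addrA subrK.
apply: smD; last by rewrite e subrr; apply: sm0.
by apply: smB; apply: rep_spec.
Qed.
Lemma qval_pi v : S (val (qpi v) - v).
Proof. exact: rep_spec. Qed.

Definition qzero := qpi 0.
Definition qadd (a b : quot W) := qpi (val a + val b).
Definition qopp (a : quot W) := qpi (- val a).
Definition qscale (r : R) (a : quot W) := qpi (r *: val a).

Lemma qaddE v w : qadd (qpi v) (qpi w) = qpi (v + w).
Proof.
apply: qpi_eq => /=.
have -> : rep W v + rep W w - (v + w) = (rep W v - v) + (rep W w - w).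
  by rewrite opprD addrACA.
by apply: smD; apply: rep_spec.
Qed.
Lemma qoppE v : qopp (qpi v) = qpi (- v).
Proof.
apply: qpi_eq => /=; rewrite -opprD; apply: smN; exact: rep_spec.
Qed.
Lemma qscaleE r v : qscale r (qpi v) = qpi (r *: v).
Proof.
apply: qpi_eq => /=; rewrite -scalerBr; apply: smZ; exact: rep_spec.
Qed.

Lemma qaddA : associative qadd.
Proof. by move=> x y z; rewrite -[x]qpiK -[y]qpiK -[z]qpiK !qaddE addrA. Qed.
Lemma qaddC : commutative qadd.
Proof. by move=> x y; rewrite -[x]qpiK -[y]qpiK !qaddE addrC. Qed.
Lemma qadd0 : left_id qzero qadd.
Proof. by move=> x; rewrite -[x]qpiK /qzero qaddE add0r. Qed.
Lemma qaddN : left_inverse qzero qopp qadd.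
Proof. by move=> x; rewrite -[x]qpiK qoppE qaddE addNr. Qed.

HB.instance Definition _ := GRing.isZmodule.Build (quot W) qaddA qaddC qadd0 qaddN.

Lemma qscaleA a b (v : quot W) : qscale a (qscale b v) = qscale (a * b) v.
Proof. by rewrite -[v]qpiK !qscaleE scalerA. Qed.
Lemma qscale1 : left_id 1 qscale.
Proof. by move=> x; rewrite -[x]qpiK qscaleE scale1r. Qed.
Lemma qscaleDr : right_distributive qscale +%R.
Proof.
move=> a x y; rewrite -[x]qpiK -[y]qpiK.
by rewrite [qpi _ + qpi _]qaddE !qscaleE [qpi _ + qpi _]qaddE scalerDr.
Qed.
Lemma qscaleDl (v : quot W) : {morph qscale^~ v : a b / a + b}.
Proof.
move=> a b; rewrite -[v]qpiK /= !qscaleE.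
by rewrite [qpi _ + qpi _]qaddE scalerDl.
Qed.

HB.instance Definition _ := GRing.Zmodule_isLmodule.Build R (quot W) qscaleA qscale1 qscaleDr qscaleDl.

Lemma qpiD v w : qpi (v + w) = qpi v + qpi w.
Proof. by rewrite -qaddE. Qed.
Lemma qpiZ (a : R) v : qpi (a *: v) = a *: qpi v.
Proof. by rewrite -qscaleE. Qed.
Lemma qpi0 : qpi 0 = 0.
Proof. by []. Qed.
Lemma qpi_eq0 v : qpi v = 0 -> S v.
Proof. by move=> h; have := @qpi_eqP v 0; rewrite subr0; apply. Qed.
End QuotOps.

Section Lin.
Variable R : comUnitRingType.
Implicit Types U V : lmodType R.

Lemma lin0 U V (f : U -> V) : Rlinear f -> f 0 = 0.
Proof.
move=> hf; have := hf 1 0 0; rewrite !scale1r addr0 => h.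
by apply: (@addIr _ (f 0)); rewrite add0r -h.
Qed.
Lemma linD U V (f : U -> V) : Rlinear f -> forall u v, f (u + v) = f u + f v.
Proof. by move=> hf u v; have := hf 1 u v; rewrite !scale1r. Qed.
Lemma linZ U V (f : U -> V) : Rlinear f -> forall a u, f (a *: u) = a *: f u.
Proof. by move=> hf a u; have := hf a u 0; rewrite !addr0 lin0 // addr0. Qed.
Lemma lin_sum U V (f : U -> V) (I : finType) (F : I -> U) : Rlinear f ->
  f (\sum_i F i) = \sum_i f (F i).
Proof.
move=> hf; apply: (big_morph f (linD hf) (lin0 hf)).
Qed.
Lemma lin_comb U V (f : U -> V) (I : finType) (c : I -> R) (F : I -> U) : Rlinear f ->
  f (\sum_i c i *: F i) = \sum_i c i *: f (F i).
Proof.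
by move=> hf; rewrite lin_sum //; apply: eq_bigr => i _; rewrite linZ.
Qed.

Lemma frob0 p U V (f : U -> V) : frob_linear p f -> f 0 = 0.
Proof.
move=> [hD _]; have := hD 0 0; rewrite addr0 => h.
by apply: (@addIr _ (f 0)); rewrite add0r -h.
Qed.
Lemma frob_comb p U V (f : U -> V) (I : finType) (c : I -> R) (F : I -> U) :
  frob_linear p f ->
  f (\sum_i c i *: F i) = \sum_i (c i ^+ p) *: f (F i).
Proof.
move=> hf; rewrite (big_morph f hf.1 (frob0 hf)).
by apply: eq_bigr => i _; rewrite hf.2.
Qed.

Lemma ex_min (P : nat -> Prop) : (exists n, P n) ->
  exists n, P n /\ forall k, P k -> (n <= k)%N.
Proof.
move=> [n Pn]; apply: NNPP => H.
suff : forall m k, (k <= m)%N -> ~ P k by move/(_ n n (leqnn n)).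
elim=> [|m IH] k hk Pk.
- apply: H; exists k; split => // j _; by move: hk; rewrite leqn0 => /eqP ->.
- apply: H; exists k; split => // j Pj; rewrite leqNgt; apply/negP => jk.
  apply: (IH j) => //; by rewrite -ltnS (leq_trans jk).
Qed.

End Lin.

Lemma sum_delta_r (R : comUnitRingType) (I : finType) (F : I -> R) j :
  \sum_i F i * (i == j)%:R = F j.
Proof.
rewrite (bigD1 j) //= eqxx mulr1 big1 ?addr0 // => i /negbTE ->; by rewrite mulr0.
Qed.
Lemma sum_delta_l (R : comUnitRingType) (V : lmodType R) (I : finType) (F : I -> V) j :
  \sum_i (j == i)%:R *: F i = F j.
Proof.
rewrite (bigD1 j) //= eqxx scale1r big1 ?addr0 // => i; rewrite eq_sym => /negbTE ->.
by rewrite scale0r.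
Qed.

Section Main.
Variables (R : comUnitRingType) (M : lmodType R).
Hypothesis loc : local_ring R.

Definition gens n (x : 'I_n -> M) := forall v : M, exists c : 'I_n -> R, v = \sum_i c i *: x i.

Lemma rel_nonunit n (x : 'I_n -> M) (c : 'I_n -> R) :
  (forall k (y : 'I_k -> M), gens y -> (n <= k)%N) -> gens x ->
  \sum_i c i *: x i = 0 -> forall j, c j \notin GRing.unit.
Proof.
move=> hmin hx hc j; apply/negP; move: j.
case: n => [|n] in x c hmin hx hc *; first by case.
move=> j cu.
pose y k := x (lift j k).
have : gens y.
  move=> v; have [a ->] := hx v.
  have hxj : x j = \sum_k (- (c j)^-1 * c (lift j k)) *: y k.
    move: hc; rewrite (bigD1_ord j) //= => /eqP; rewrite addr_eq0 => /eqP h.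
    rewrite -[x j]scale1r -(mulVr cu) -scalerA h scalerN -scaleNr scaler_sumr.
    by apply: eq_bigr => k _; rewrite scalerA.
  exists (fun k => a (lift j k) + a j * (- (c j)^-1 * c (lift j k))).
  rewrite (bigD1_ord j) //= hxj scaler_sumr -big_split /=; apply: eq_bigr => k _.
  by rewrite scalerA scalerDl addrC.
by move/hmin; rewrite ltnn.
Qed.

Lemma fp_rels : finitely_presented M -> forall n (x : 'I_n -> M), gens x ->
 exists (T : finType) (w : T -> 'I_n -> R), (forall t, \sum_i w t i *: x i = 0) /\
   forall c, \sum_i c i *: x i = 0 -> exists b : T -> R, forall i, c i = \sum_t b t * w t i.
Proof.
move=> [n0 [m0 [f [g [hf [hg [fs hk]]]]]]] n x hx.
pose u i := epsilon (inhabits 0) (fun u => f u = x i).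
have hu i : f (u i) = x i.
  by rewrite /u; apply: (epsilon_spec (inhabits 0) (fun u => f u = x i)); apply: fs.
pose be (a : 'I_n0) := epsilon (inhabits (fun _ => 0))
   (fun c : 'I_n -> R => f 'e_a = \sum_i c i *: x i).
have hbe a : f 'e_a = \sum_i be a i *: x i.
  by rewrite /be; apply: (epsilon_spec (inhabits (fun _ => 0))
   (fun c : 'I_n -> R => f 'e_a = \sum_i c i *: x i)); apply: hx.
pose B (v : 'rV[R]_n0) i := \sum_a v 0 a * be a i.
have hB v : \sum_i B v i *: x i = f v.
  rewrite {2}(row_sum_delta v) lin_comb //.
  under eq_bigr do rewrite /B scaler_suml.
  rewrite exchange_big /=; apply: eq_bigr => a _; rewrite hbe scaler_sumr.
  by apply: eq_bigr => i _; rewrite scalerA.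
have hBlin (I : finType) (c : I -> R) (F : I -> 'rV_n0) i :
    B (\sum_k c k *: F k) i = \sum_k c k * B (F k) i.
  rewrite /B; under eq_bigr do rewrite summxE mulr_suml.
  rewrite exchange_big /=; apply: eq_bigr => k _; rewrite mulr_sumr.
  by apply: eq_bigr => a _; rewrite mxE mulrA.
pose w (t : ('I_n + 'I_m0)%type) : 'I_n -> R :=
  match t with inl i => fun l => (i == l)%:R - B (u i) l | inr b => B (g 'e_b) end.
exists ('I_n + 'I_m0)%type, w; split.
- case=> [i|b] /=.
  + under eq_bigr do rewrite scalerBl.
    by rewrite sumrB hB hu sum_delta_l subrr.
  + by rewrite hB; apply/(proj2 (hk _)); exists 'e_b.
- move=> c hc; pose v := \sum_i c i *: u i.
  have fv : f v = 0.
    by rewrite lin_comb //; under eq_bigr do rewrite hu; exact: hc.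
  have [wv hwv] := proj1 (hk v) fv.
  exists (fun t => match t with inl i => c i | inr b => wv 0 b end) => l.
  rewrite big_sumType /=.
  have e1 : \sum_i c i * ((i == l)%:R - B (u i) l) = c l - B v l.
    under eq_bigr do rewrite mulrBr.
    by rewrite sumrB sum_delta_r /v hBlin.
  have e2 : \sum_b wv 0 b * B (g 'e_b) l = B v l.
    by rewrite -hBlin -lin_comb // -row_sum_delta hwv.
  by rewrite e1 e2 subrK.
Qed.
End Main.

Lemma sum_delta_l' (R : comUnitRingType) (I : finType) (F : I -> R) j :
  \sum_i (i == j)%:R * F i = F j.
Proof.
under eq_bigr do rewrite mulrC.
exact: sum_delta_r.
Qed.

Section Frob.
Variables (R : comUnitRingType) (M : lmodType R) (p : nat).
Hypotheses (loc : local_ring R) (hp : prime p) (p0 : (p%:R : R) = 0).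
Variable phi : M -> M.
Hypothesis hphi : is_frob_pullback p phi.
Variables (N : nat) (x : 'I_N -> M) (T : finType) (w : T -> 'I_N -> R).
Hypotheses (hx : gens x) (hw : forall t, \sum_i w t i *: x i = 0)
  (hwspan : forall c, \sum_i c i *: x i = 0 ->
     exists b : T -> R, forall i, c i = \sum_t b t * w t i)
  (hwn : forall t i, w t i \notin GRing.unit).

Let chR : p \in [pchar R]. Proof. by rewrite inE hp p0 eqxx. Qed.
Let frobD (a b : R) : (a + b) ^+ p = a ^+ p + b ^+ p.
Proof. by rewrite -!(pFrobenius_autE chR) rmorphD. Qed.
Let frobB (a b : R) : (a - b) ^+ p = a ^+ p - b ^+ p.
Proof. by rewrite -!(pFrobenius_autE chR) rmorphB. Qed.
Let frob_sum (I : finType) (F : I -> R) : (\sum_i F i) ^+ p = \sum_i F i ^+ p.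
Proof. by rewrite -!(pFrobenius_autE chR) rmorph_sum. Qed.
Let p_gt0 : (0 < p)%N. Proof. exact: prime_gt0. Qed.

Definition wp t : 'rV[R]_N := \row_i (w t i ^+ p).
Definition Lpred (v : 'rV[R]_N) := exists b : T -> R, v = \sum_t b t *: wp t.
Lemma L0 : Lpred 0.
Proof. by exists (fun _ => 0); rewrite big1 // => t _; rewrite scale0r. Qed.
Lemma LD u v : Lpred u -> Lpred v -> Lpred (u + v).
Proof.
move=> [b1 ->] [b2 ->]; exists (fun t => b1 t + b2 t).
by rewrite -big_split; apply: eq_bigr => t _; rewrite scalerDl.
Qed.
Lemma LZ a v : Lpred v -> Lpred (a *: v).
Proof.
move=> [b ->]; exists (fun t => a * b t).
by rewrite scaler_sumr; apply: eq_bigr => t _; rewrite scalerA.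
Qed.
Definition Lsub := Submod L0 LD LZ.
Definition pi := qpi Lsub.

Lemma pi_lin : Rlinear pi.
Proof. by move=> a u v; rewrite /pi qpiD qpiZ. Qed.

Definition cm (m : M) : 'I_N -> R :=
  epsilon (inhabits (fun _ => 0)) (fun c => m = \sum_i c i *: x i).
Lemma hcm m : m = \sum_i cm m i *: x i.
Proof.
by rewrite /cm; apply: (epsilon_spec (inhabits (fun _ => 0))
   (fun c : 'I_N -> R => m = \sum_i c i *: x i)); apply: hx.
Qed.
Definition frow (c : 'I_N -> R) : 'rV[R]_N := \row_i (c i ^+ p).
Definition psi (m : M) := pi (frow (cm m)).

Lemma psiE c : psi (\sum_i c i *: x i) = pi (frow c).
Proof.
rewrite /psi /pi; apply: qpi_eq => /=.
set m := \sum_i c i *: x i.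
have hrel : \sum_i (cm m i - c i) *: x i = 0.
  under eq_bigr do rewrite scalerBl.
  by rewrite sumrB -hcm subrr.
have [b hb] := hwspan hrel.
exists (fun t => b t ^+ p); apply/rowP => i.
rewrite !mxE summxE -frobB hb frob_sum; apply: eq_bigr => t _.
by rewrite !mxE exprMn.
Qed.

Lemma psi_frob : frob_linear p psi.
Proof.
split.
- move=> m1 m2; rewrite (hcm m1) (hcm m2) -big_split /=.
  under eq_bigr do rewrite -scalerDl.
  rewrite !psiE /pi -qpiD; congr qpi; apply/rowP => i; rewrite !mxE.
  exact: frobD.
- move=> a m; rewrite (hcm m) scaler_sumr.
  under eq_bigr do rewrite scalerA.
  rewrite !psiE /pi -qpiZ; congr qpi; apply/rowP => i; rewrite !mxE.
  exact: exprMn.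
Qed.

Lemma frow_delta i : frow (fun l => (i == l)%:R) = 'e_i.
Proof.
apply/rowP => l; rewrite !mxE eq_sym.
by case: (l == i); rewrite ?expr1n // expr0n; case: p p_gt0.
Qed.

Lemma relY (g : M -> quot Lsub) : Rlinear g -> (forall m, psi m = g (phi m)) ->
  forall d : 'I_N -> R, \sum_i d i *: phi (x i) = 0 ->
  exists b : T -> R, forall i, d i = \sum_t b t * w t i ^+ p.
Proof.
move=> hg hpsi d hd.
have : g (\sum_i d i *: phi (x i)) = 0 by rewrite hd lin0.
rewrite lin_comb //; under eq_bigr do rewrite -hpsi.
under eq_bigr do rewrite -[x _]sum_delta_l psiE frow_delta.
rewrite -lin_comb; last exact: pi_lin.
have -> : \sum_i d i *: 'e_i = \row_i d i :> 'rV[R]_N.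
  by rewrite [RHS]row_sum_delta; apply: eq_bigr => i _; rewrite mxE.
move/qpi_eq0 => [b hb]; exists b => i.
have := congr1 (fun v : 'rV[R]_N => v 0 i) hb; rewrite /= mxE summxE => ->.
by apply: eq_bigr => t _; rewrite !mxE.
Qed.

Definition hmap (v : 'rV[R]_N) : M := \sum_i v 0 i *: phi (x i).
Lemma hmap_lin : Rlinear hmap.
Proof.
move=> a u v; rewrite /hmap scaler_sumr -big_split; apply: eq_bigr => i _.
by rewrite !mxE scalerDl scalerA.
Qed.
Lemma hmapL v : Lpred v -> hmap v = 0.
Proof.
move=> [b ->]; rewrite lin_comb; last exact: hmap_lin.
rewrite big1 // => t _; rewrite /hmap.
under eq_bigr do rewrite mxE.
by rewrite -(frob_comb _ _ hphi.1) hw (frob0 hphi.1) scaler0.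
Qed.
Definition kmap (q : quot Lsub) : M := hmap (val q).
Lemma kmap_pi v : kmap (pi v) = hmap v.
Proof.
have h := hmapL (qval_pi Lsub v).
apply: subr0_eq; rewrite /kmap -h.
by rewrite (linD hmap_lin) -scaleN1r (linZ hmap_lin) scaleN1r.
Qed.
Lemma kmap_lin : Rlinear kmap.
Proof.
move=> a q1 q2; rewrite -[q1]qpiK -[q2]qpiK -qpiZ -qpiD.
rewrite -!/(pi _) !kmap_pi; exact: hmap_lin.
Qed.

Lemma spanY : forall m : M, exists e : 'I_N -> R, m = \sum_i e i *: phi (x i).
Proof.
have [hfl huniv] := hphi.
have [g [hg [hpsi _]]] := huniv _ psi psi_frob.
have [g0 [_ [_ huq]]] := huniv M phi hfl.
have kg m : kmap (g m) = m.
  have e1 := huq id (fun a u v => erefl) (fun m => erefl) m.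
  rewrite /= in e1; rewrite [RHS]e1; apply: (huq (fun z => kmap (g z))).
  - by move=> a u v; rewrite hg kmap_lin.
  - move=> m'; rewrite -hpsi {1}(hcm m') /psi kmap_pi /hmap.
    rewrite (frob_comb _ _ hfl); apply: eq_bigr => i _; by rewrite mxE.
move=> m; exists (fun i => val (g m) 0 i); by rewrite -{1}(kg m).
Qed.

Lemma w_zero : forall t i, w t i = 0.
Proof.
have [hfl huniv] := hphi.
have [g [hg [hpsi _]]] := huniv _ psi psi_frob.
pose Qm i := epsilon (inhabits (fun _ => 0))
  (fun e : 'I_N -> R => x i = \sum_j e j *: phi (x j)).
have hQ i : x i = \sum_j Qm i j *: phi (x j).
  by rewrite /Qm; apply: (epsilon_spec (inhabits (fun _ => 0))
    (fun e : 'I_N -> R => x i = \sum_j e j *: phi (x j))); apply: spanY.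
pose Pm j := cm (phi (x j)).
have hP j : phi (x j) = \sum_l Pm j l *: x l by apply: hcm.
pose d t j := \sum_i w t i * Qm i j.
have hd t : \sum_j d t j *: phi (x j) = 0.
  under eq_bigr do rewrite scaler_suml.
  rewrite exchange_big /= -[RHS](hw t); apply: eq_bigr => i _.
  by rewrite (hQ i) scaler_sumr; apply: eq_bigr => j _; rewrite scalerA.
pose bb t := epsilon (inhabits (fun _ => 0))
  (fun b : T -> R => forall j, d t j = \sum_l b l * w l j ^+ p).
have hbb t j : d t j = \sum_l bb t l * w l j ^+ p.
  move: j; rewrite /bb; apply: (epsilon_spec (inhabits (fun _ => 0))
    (fun b : T -> R => forall j, d t j = \sum_l b l * w l j ^+ p)).
  exact: (relY hg hpsi (hd t)).
have hr i : \sum_l ((i == l)%:R - \sum_j Qm i j * Pm j l) *: x l = 0.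
  under eq_bigr do rewrite scalerBl.
  rewrite sumrB sum_delta_l; apply/eqP; rewrite subr_eq0; apply/eqP.
  rewrite {1}(hQ i); under eq_bigr => j _ do rewrite hP scaler_sumr.
  rewrite exchange_big /=; apply: eq_bigr => l _; rewrite scaler_suml.
  by apply: eq_bigr => j _; rewrite scalerA.
pose tt i := epsilon (inhabits (fun _ => 0)) (fun b : T -> R => forall l,
  (i == l)%:R - \sum_j Qm i j * Pm j l = \sum_t b t * w t l).
have htt i l : (i == l)%:R = \sum_j Qm i j * Pm j l + \sum_t tt i t * w t l.
  have : forall l, (i == l)%:R - \sum_j Qm i j * Pm j l = \sum_t tt i t * w t l.
    rewrite /tt; apply: (epsilon_spec (inhabits (fun _ => 0)) (fun b : T -> R => forall l,
      (i == l)%:R - \sum_j Qm i j * Pm j l = \sum_t b t * w t l)).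
    exact: hwspan (hr i).
  by move/(_ l) <-; rewrite addrC subrK.
have pm1 : (0 < p.-1)%N by case: p hp p_gt0 => [|[|q]].
have hpw (a : R) : a ^+ p = a ^+ p.-1 * a by rewrite -exprSr prednK.
pose U (z1 z2 : T * 'I_N) := bb z1.1 z2.1 * w z2.1 z2.2 ^+ p.-1 * Pm z2.2 z1.2
   + (z2.2 == z1.2)%:R * \sum_i w z1.1 i * tt i z2.1.
have key t i' : w t i' = \sum_z U (t, i') z * w z.1 z.2.
  rewrite -(pair_bigA _ (fun l j => U (t, i') (l, j) * w l j)) /=.
  transitivity (\sum_j d t j * Pm j i' + \sum_l (\sum_i w t i * tt i l) * w l i').
    rewrite -[LHS](sum_delta_r (w t) i').
    under eq_bigr do rewrite htt mulrDr.
    rewrite big_split /=; congr (_ + _).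
    + under eq_bigr do rewrite mulr_sumr.
      rewrite exchange_big /=; apply: eq_bigr => j _; rewrite /d mulr_suml.
      by apply: eq_bigr => i _; rewrite mulrA.
    + under eq_bigr do rewrite mulr_sumr.
      rewrite exchange_big /=; apply: eq_bigr => l _; rewrite mulr_suml.
      by apply: eq_bigr => i _; rewrite mulrA.
  under eq_bigr => l _ do under eq_bigr => j _ do rewrite mulrDl.
  under eq_bigr => l _ do rewrite big_split /=.
  rewrite big_split /=; congr (_ + _).
  + rewrite exchange_big /=; apply: eq_bigr => j _; rewrite hbb mulr_suml.
    by apply: eq_bigr => l _; rewrite hpw mulrA mulrAC.
  + apply: eq_bigr => l _.
    under [RHS]eq_bigr do rewrite -mulrA.
    by rewrite sum_delta_l'.
have hU z1 z2 : U z1 z2 \notin GRing.unit.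
  apply: local_addn => //.
    apply: local_mulnl; apply: local_mulnr; by rewrite unitrX_pos ?hwn.
  apply: local_mulnr; apply: local_sum => // i; apply: local_mulnl; exact: hwn.
have := nak loc (s := fun z : T * 'I_N => w z.1 z.2) hU.
move=> H t i; apply: (H _ (t, i)); case=> t' i'; exact: key.
Qed.
End Frob.
Unset Implicit Arguments.

Theorem lemma2p8 (p : nat) (R : comUnitRingType) (M : lmodType R) :
  local_ring R -> Fp_algebra R p ->
  finitely_presented M -> frob_pullback_iso p M ->
  free_module M.
Proof.
move=> loc [hp p0] hfp [phi hphi].
have ex : exists n, exists x : 'I_n -> M, gens x.
  case: (hfp) => [n0 [m0 [f [g [hf [hg [fs hk]]]]]]].
  exists n0, (fun a => f 'e_a) => v; have [u <-] := fs v.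
  by exists (fun a => u 0 a); rewrite {1}(row_sum_delta u) lin_comb.
have [N [[x hx] hmin]] := ex_min ex.
have hmin' : forall k (y : 'I_k -> M), gens y -> (N <= k)%N.
  by move=> k y hy; apply: hmin; exists y.
have [T [w [hw hwspan]]] := fp_rels hfp hx.
have hwn t i : w t i \notin GRing.unit := rel_nonunit hmin' hx (hw t) i.
have wz := w_zero loc hp p0 hphi hx hw hwspan hwn.
have relz c : \sum_i c i *: x i = 0 -> forall i, c i = 0.
  move=> hc i; have [b ->] := hwspan _ hc.
  by rewrite big1 // => t _; rewrite wz mulr0.
exists 'I_N, x; split.
- move=> n idx c injx hc i.
  pose c' j := \sum_(i' < n | idx i' == j) c i'.
  have hc' : \sum_j c' j *: x j = 0.
    apply: etrans hc; under eq_bigr do rewrite scaler_suml.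
    rewrite (exchange_big_dep xpredT) //=; apply: eq_bigr => i' _.
    by rewrite (big_pred1 (idx i')) // => j; rewrite /= eq_sym.
  have := relz _ hc' (idx i); rewrite /c'.
  rewrite (eq_bigl (pred1 i)) ?big_pred1_eq // => i'.
  by rewrite /= (inj_eq injx).
- move=> v; have [c ->] := hx v; by exists N, id, c.
Qed.
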